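(* Let $k$ be an infinite $C_1$-field with $\operatorname{char} k\neq 2$ which is not algebraically closed. Let $a,b,c,d\in k$ with $a\in k\setminus k^2$, $b\neq 0$, and at least one of $c,d$ non-zero, and let $L_0=k(t_1,t_2,t_3,t_4)$ be a field extension of $k$ with $\operatorname{trdeg}_k(L_0)=2$ whose generators satisfy $t_1^2-at_2^2=b$ and $t_3^2-at_4^2=2ct_1+d$. Then $L_0$ is $k$-rational.
   Context: A field $k$ is a $C_1$-field if every homogeneous polynomial $f\in k[x_1,\dots,x_n]$ of degree less than $n$ has a non-trivial zero in $k^n$. A field extension is $k$-rational if it is purely transcendental over $k$. *)

(* Defs.v *)
From HB Require Import structures.
From mathcomp Require Import all_boot all_order all_algebra.
From mathcomp Require Import mpoly.
Set Implicit Arguments. Unset Strict Implicit. Unset Printing Implicit Defensive.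
Import Order.TTheory GRing.Theory.
Local Open Scope ring_scope.

Definition C1_field (k : fieldType) : Prop :=
  forall (n d : nat) (f : {mpoly k[n]}),
    (0 < d)%N -> (d < n)%N -> f \is d.-homog ->
    exists v : 'I_n -> k, (exists i, v i != 0) /\ f.@[v] = 0.

Definition infinite_field (k : fieldType) : Prop :=
  forall s : seq k, exists x : k, x \notin s.

(* Extensions of k are fields L with a ring morphism iota : k -> L. *)

Definition alg_indep (k L : fieldType) (iota : {rmorphism k -> L})
    (n : nat) (x : 'I_n -> L) : Prop :=
  forall p : {mpoly k[n]}, (map_mpoly iota p).@[x] = 0 -> p = 0.

Definition generates (k L : fieldType) (iota : {rmorphism k -> L})
    (n : nat) (x : 'I_n -> L) : Prop :=
  forall y : L, exists p q : {mpoly k[n]},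
    (map_mpoly iota q).@[x] != 0 /\
    y = (map_mpoly iota p).@[x] / (map_mpoly iota q).@[x].

Definition trdeg_eq (k L : fieldType) (iota : {rmorphism k -> L}) (m : nat) : Prop :=
  (exists x : 'I_m -> L, alg_indep iota x) /\
  (forall (n : nat) (x : 'I_n -> L), alg_indep iota x -> (n <= m)%N).

Definition k_rational (k L : fieldType) (iota : {rmorphism k -> L}) : Prop :=
  exists (n : nat) (x : 'I_n -> L), alg_indep iota x /\ generates iota x.

(* Main.v *)
Require Import Defs.
From HB Require Import structures.
From mathcomp Require Import all_boot all_order all_algebra.
From mathcomp Require Import mpoly.
From mathcomp Require Import ring zify.
Import GRing.Theory.
Set Implicit Arguments. Unset Strict Implicit. Unset Printing Implicit Defensive.
Local Open Scope ring_scope.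

Section Closure.
Variables (k L : fieldType) (iota : {rmorphism k -> L}).

Definition ev n (z : 'I_n -> L) (p : {mpoly k[n]}) : L := (map_mpoly iota p).@[z].

Lemma evD n (z : 'I_n -> L) p q : ev z (p + q) = ev z p + ev z q.
Proof. by rewrite /ev !rmorphD. Qed.
Lemma evN n (z : 'I_n -> L) p : ev z (- p) = - ev z p.
Proof. by rewrite /ev !rmorphN. Qed.
Lemma evB n (z : 'I_n -> L) p q : ev z (p - q) = ev z p - ev z q.
Proof. by rewrite /ev !rmorphB. Qed.
Lemma evM n (z : 'I_n -> L) p q : ev z (p * q) = ev z p * ev z q.
Proof. by rewrite /ev !rmorphM. Qed.
Lemma evXn n (z : 'I_n -> L) p e : ev z (p ^+ e) = ev z p ^+ e.
Proof. by rewrite /ev !rmorphXn. Qed.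
Lemma evC n (z : 'I_n -> L) c : ev z c%:MP = iota c.
Proof. by rewrite /ev map_mpolyC mevalC. Qed.
Lemma ev1 n (z : 'I_n -> L) : ev z 1 = 1.
Proof. by rewrite /ev !rmorph1. Qed.
Lemma ev0 n (z : 'I_n -> L) : ev z 0 = 0.
Proof. by rewrite /ev !rmorph0. Qed.
Lemma evXU n (z : 'I_n -> L) i : ev z 'X_i = z i.
Proof. by rewrite /ev map_mpolyX mevalXU. Qed.
Lemma evZ n (z : 'I_n -> L) c p : ev z (c *: p) = iota c * ev z p.
Proof. by rewrite /ev map_mpolyZ mevalZ. Qed.
Lemma evXm n (z : 'I_n -> L) m : ev z 'X_[m] = \prod_(i < n) z i ^+ m i.
Proof. by rewrite /ev map_mpolyX mevalX. Qed.

Definition inS n (z : 'I_n -> L) (y : L) :=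
  exists p q : {mpoly k[n]}, ev z q != 0 /\ y = ev z p / ev z q.

Variables (n : nat) (z : 'I_n -> L).

Lemma inS_ev p : inS z (ev z p).
Proof. by exists p, 1; rewrite ev1 oner_eq0 divr1. Qed.
Lemma inS_C c : inS z (iota c).
Proof. by rewrite -(evC z); apply: inS_ev. Qed.
Lemma inS_X i : inS z (z i).
Proof. by rewrite -(evXU z); apply: inS_ev. Qed.
Lemma inS_add x y : inS z x -> inS z y -> inS z (x + y).
Proof.
move=> [p [q [hq ->]]] [p' [q' [hq' ->]]].
exists (p * q' + p' * q), (q * q'); rewrite evM mulf_neq0 //; split=> //.
rewrite evD !evM; field; by rewrite hq hq'.
Qed.
Lemma inS_mul x y : inS z x -> inS z y -> inS z (x * y).
Proof.
move=> [p [q [hq ->]]] [p' [q' [hq' ->]]].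
exists (p * p'), (q * q'); rewrite evM mulf_neq0 //; split=> //.
rewrite !evM; field; by rewrite hq hq'.
Qed.
Lemma inS_opp x : inS z x -> inS z (- x).
Proof.
move=> [p [q [hq ->]]]; exists (- p), q; split=> //.
by rewrite evN mulNr.
Qed.
Lemma inS_inv x : inS z x -> inS z (x^-1).
Proof.
move=> [p [q [hq ->]]]; have [hp|hp] := eqVneq (ev z p) 0.
  by rewrite hp mul0r invr0; exists 0, 1; rewrite ev0 ev1 mul0r oner_eq0.
exists q, p; split=> //; rewrite invfM invrK mulrC //.
Qed.
Lemma inS_sub x y : inS z x -> inS z y -> inS z (x - y).
Proof. by move=> hx hy; apply: inS_add => //; apply: inS_opp. Qed.
Lemma inS_div x y : inS z x -> inS z y -> inS z (x / y).
Proof. by move=> hx hy; apply: inS_mul => //; apply: inS_inv. Qed.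
Lemma inS_exp x e : inS z x -> inS z (x ^+ e).
Proof.
move=> hx; elim: e => [|e ih]; first by rewrite expr0 -(rmorph1 iota); apply: inS_C.
by rewrite exprS; apply: inS_mul.
Qed.
Lemma inS_0 : inS z 0.
Proof. by rewrite -(rmorph0 iota); apply: inS_C. Qed.
Lemma inS_1 : inS z 1.
Proof. by rewrite -(rmorph1 iota); apply: inS_C. Qed.

Lemma inS_evw m (w : 'I_m -> L) (P : {mpoly k[m]}) :
  (forall i, inS z (w i)) -> inS z (ev w P).
Proof.
move=> hw; rewrite {1}(mpolyE P).
rewrite (big_morph (ev w) (@evD _ w) (ev0 w)).
apply: (big_ind (inS z)); [exact: inS_0 | exact: inS_add | ].
move=> mm _; rewrite evZ evXm.
apply: inS_mul; first exact: inS_C.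
apply: (big_ind (inS z)); [exact: inS_1 | exact: inS_mul | ].
by move=> i _; apply: inS_exp.
Qed.

Lemma gen_trans m (t : 'I_m -> L) :
  generates iota t -> (forall i, inS z (t i)) -> generates iota z.
Proof.
move=> gt ht y; have [p [q [hq ->]]] := gt y.
have : inS z (ev t p / ev t q) by apply: inS_div; apply: inS_evw.
by move=> [p' [q' [h1 h2]]]; exists p', q'.
Qed.

Lemma gen_inS : generates iota z -> forall y, inS z y.
Proof. by move=> g y; have [p [q [h1 h2]]] := g y; exists p, q. Qed.

End Closure.

Section Box.
Variables (k : fieldType) (n : nat).
Implicit Types (p q : {mpoly k[n]}).

Definition boxed (B : nat) p := forall m, m \in msupp p -> forall i, (m i <= B)%N.

Lemma boxed_le B B' p : (B <= B')%N -> boxed B p -> boxed B' p.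
Proof. by move=> hB hp m hm i; apply: leq_trans (hp m hm i) hB. Qed.
Lemma boxed0 B : boxed B 0.
Proof. by move=> m; rewrite msupp0. Qed.
Lemma boxedC B c : boxed B c%:MP.
Proof.
move=> m; rewrite msuppC; case: (c == 0) => //.
by rewrite inE => /eqP -> i; rewrite mnm0E.
Qed.
Lemma boxedD B p q : boxed B p -> boxed B q -> boxed B (p + q).
Proof.
move=> hp hq m /msuppD_le; rewrite mem_cat => /orP [/hp|/hq] //.
Qed.
Lemma boxedN B p : boxed B p -> boxed B (- p).
Proof. by move=> hp m; rewrite (perm_mem (msuppN p)) => /hp. Qed.
Lemma boxedZ B c p : boxed B p -> boxed B (c *: p).
Proof. by move=> hp m /msuppZ_le /hp. Qed.
Lemma boxedM B B' p q : boxed B p -> boxed B' q -> boxed (B + B') (p * q).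
Proof.
move=> hp hq m /msuppM_le /allpairsP [[m1 m2] /= [h1 h2 ->]] i.
by rewrite mnmDE leq_add // ?hp ?hq.
Qed.
Lemma boxedX B (m : 'X_{1..n}) : (forall i, (m i <= B)%N) -> boxed B 'X_[m].
Proof. by move=> hm m'; rewrite msuppX inE => /eqP ->. Qed.
Lemma boxedXn B p e : boxed B p -> boxed (e * B) (p ^+ e).
Proof.
move=> hp; elim: e => [|e ih]; first by rewrite expr0; apply: boxedC.
by rewrite exprS mulSn; apply: boxedM.
Qed.
Lemma boxed_sum B (I : Type) (r : seq I) (P : pred I) (F : I -> {mpoly k[n]}) :
  (forall i, P i -> boxed B (F i)) -> boxed B (\sum_(i <- r | P i) F i).
Proof.
move=> h; apply: (big_ind (boxed B)) => //; [exact: boxed0 | exact: boxedD].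
Qed.
Lemma boxed_exists p : exists B, boxed B p.
Proof.
exists (msize p) => m hm i.
apply: leq_trans (ltnW (msize_mdeg_lt hm)).
rewrite mdegE (bigD1 i) //=; exact: leq_addr.
Qed.

End Box.

Definition mon (i j : nat) : 'X_{1..2} :=
  [multinom (if val l == 0%N then i else j) | l < 2].

Lemma monE0 i j : mon i j ord0 = i. Proof. by rewrite mnmE. Qed.
Lemma monE1 i j : mon i j ord_max = j. Proof. by rewrite mnmE. Qed.

Lemma mon_eta (m : 'X_{1..2}) : m = mon (m ord0) (m ord_max).
Proof.
apply/mnmP => l; rewrite mnmE; case: l => [[|[|l]] hl] //=.
  by congr (m _); apply: val_inj.
by congr (m _); apply: val_inj.
Qed.

Lemma mon_inj i j i' j' : (mon i j == mon i' j') = ((i == i') && (j == j')).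
Proof.
apply/eqP/andP => [h|[/eqP -> /eqP ->]] //.
by split; apply/eqP; [move: (monE0 i j) | move: (monE1 i j)]; rewrite h ?monE0 ?monE1 => ->.
Qed.

Lemma boxed_test (k : fieldType) T (p : {mpoly k[2]}) :
  boxed T p -> (forall i j : 'I_T.+1, p@_(mon i j) = 0) -> p = 0.
Proof.
move=> hb hc; apply/mpolyP => m; rewrite mcoeff0.
case: (boolP (m \in msupp p)) => hm; last by apply/eqP; rewrite mcoeff_eq0.
have h0 := hb m hm ord0; have h1 := hb m hm ord_max.
rewrite (mon_eta m).
by have := hc (Ordinal (n:=T.+1) (m:=m ord0) h0) (Ordinal (n:=T.+1) (m:=m ord_max) h1).
Qed.

Lemma ker_nonzero (k : fieldType) m n (A : 'M[k]_(m, n)) :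
  (n < m)%N -> exists2 w : 'rV_m, w != 0 & w *m A = 0.
Proof.
move=> hnm.
have hk : kermx A != 0.
  rewrite -mxrank_eq0 mxrank_ker; have := rank_leq_col A; lia.
have [i hi] : exists i, row i (kermx A) != 0.
  apply/existsP; move: hk; apply: contraR; rewrite negb_exists => /forallP h.
  apply/eqP/row_matrixP => i; rewrite row0; exact/eqP/negPn/h.
by exists (row i (kermx A)) => //; rewrite -row_mul mulmx_ker row0.
Qed.

Lemma coef_pick (k : fieldType) (U : finType) (F : U -> {mpoly k[2]})
    (c : 'I_#|U| -> k) u0 m0 :
  (forall u, (F u)@_m0 = (u == u0)%:R) ->
  (\sum_r c r *: F (enum_val r))@_m0 = c (enum_rank u0).
Proof.
move=> hF; rewrite raddf_sum /=.
rewrite (bigD1 (enum_rank u0)) //= mcoeffZ hF enum_rankK eqxx mulr1 big1 ?addr0 //.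
move=> r hr; rewrite mcoeffZ hF.
suff -> : (enum_val r == u0) = false by rewrite mulr0.
apply/negbTE; apply: contra hr => /eqP <-; by rewrite enum_valK.
Qed.

Lemma ev_mon (k L : fieldType) (iota : {rmorphism k -> L}) (y : 'I_2 -> L) i j :
  ev iota y 'X_[mon i j] = y ord0 ^+ i * y ord_max ^+ j.
Proof.
rewrite evXm big_ord_recl big_ord1 monE0.
have -> : lift ord0 ord0 = ord_max :> 'I_2 by apply: val_inj.
by rewrite monE1.
Qed.

Lemma count_ineq e M : (0 < e)%N -> (0 < M)%N ->
  let N := (4 * e * M + 2 * e)%N in let T := (2 * N * M)%N in
  (e <= T)%N /\ (T.+1 * T.+1 < N.+1 * N.+1 + (T - e).+1 * (T - e).+1)%N.
Proof.
move=> he hM N T.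
have hN : (1 <= N)%N by rewrite /N; nia.
have hT : (e <= T)%N by rewrite /T /N; nia.
split=> //.
have hNN : (N * N = 2 * e * T + 2 * e * N)%N by rewrite /T /N; nia.
nia.
Qed.

Section Key.
Variables (k L : fieldType) (iota : {rmorphism k -> L}).

Lemma key (z y : 'I_2 -> L) :
  alg_indep iota y -> generates iota z -> alg_indep iota z.
Proof.
move=> iy gz Q hQ; apply/eqP/negPn/negP => nzQ.
have [p0 [q0 [hq0 e0]]] := gz (y ord0).
have [p1 [q1 [hq1 e1]]] := gz (y ord_max).
have [B0 hB0] := boxed_exists p0; have [B1 hB1] := boxed_exists q0.
have [B2 hB2] := boxed_exists p1; have [B3 hB3] := boxed_exists q1.
have [E hE] := boxed_exists Q.
pose M := (B0 + B1 + B2 + B3).+1; pose e := E.+1.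
have bM0 : boxed M p0 by apply: boxed_le hB0; rewrite /M; lia.
have bM1 : boxed M q0 by apply: boxed_le hB1; rewrite /M; lia.
have bM2 : boxed M p1 by apply: boxed_le hB2; rewrite /M; lia.
have bM3 : boxed M q1 by apply: boxed_le hB3; rewrite /M; lia.
have bQ : boxed e Q by apply: boxed_le hE; rewrite /e; lia.
have [] := @count_ineq e M isT isT.
set N := (4 * e * M + 2 * e)%N; set T := (2 * N * M)%N => heT hcount.
pose K := (T - e)%N.
pose U : finType := ('I_N.+1 * 'I_N.+1 + 'I_K.+1 * 'I_K.+1)%type.
pose V : finType := ('I_T.+1 * 'I_T.+1)%type.
pose basis (u : U) : {mpoly k[2]} := match u with
  | inl (i, j) => p0 ^+ i * q0 ^+ (N - i) * p1 ^+ j * q1 ^+ (N - j)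
  | inr (i, j) => Q * 'X_[mon i j] end.
pose A := \matrix_(r < #|U|, s < #|V|)
  (basis (enum_val r))@_(mon (enum_val s).1 (enum_val s).2).
have cardU : #|U| = (N.+1 * N.+1 + K.+1 * K.+1)%N.
  by rewrite card_sum !card_prod !card_ord.
have cardV : #|V| = (T.+1 * T.+1)%N by rewrite card_prod !card_ord.
have [w nzw hw] : exists2 w : 'rV_#|U|, w != 0 & w *m A = 0.
  by apply: ker_nonzero; rewrite cardU cardV.
pose Lin := \sum_r w 0 r *: basis (enum_val r).
have bbasis : forall u, boxed T (basis u).
  case=> [[i j]|[i j]] /=.
    have hi : (i <= N)%N by rewrite -ltnS.
    have hj : (j <= N)%N by rewrite -ltnS.
    have -> : T = (i * M + (N - i) * M + j * M + (N - j) * M)%N.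
      by rewrite -addnA -!mulnDl !subnKC // /T mul2n -addnn mulnDl.
    by apply: boxedM; [apply: boxedM; [apply: boxedM|]|]; apply: boxedXn.
  have -> : T = (e + K)%N by rewrite /K subnKC.
  apply: boxedM => //; apply: boxedX => l.
  by rewrite mnmE; case: ifP => _; rewrite -ltnS; exact: ltn_ord.
have Lin0 : Lin = 0.
  apply: (@boxed_test _ T).
    by apply: boxed_sum => r _; apply: boxedZ.
  move=> i j; rewrite raddf_sum /=.
  have := congr1 (fun W : 'rV_#|V| => W 0 (enum_rank ((i, j) : V))) hw.
  rewrite !mxE => h; apply: (etrans _ h); apply: eq_bigr => r _.
  by rewrite mcoeffZ !mxE enum_rankK.
pose D := (ev iota z q0 * ev iota z q1) ^+ N.
have ep0 : ev iota z p0 = y ord0 * ev iota z q0.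
  by rewrite e0 mulrVK // unitfE.
have ep1 : ev iota z p1 = y ord_max * ev iota z q1.
  by rewrite e1 mulrVK // unitfE.
pose basisY (u : U) : {mpoly k[2]} := match u with
  | inl (i, j) => 'X_[mon i j] | inr _ => 0 end.
pose PY := \sum_r w 0 r *: basisY (enum_val r).
have evLin : ev iota z Lin = D * ev iota y PY.
  rewrite /Lin /PY !(big_morph (ev iota _) (@evD _ _ iota _ _) (ev0 iota _)).
  rewrite mulr_sumr; apply: eq_bigr => r _; rewrite !evZ mulrCA; congr (_ * _).
  case: (enum_val r) => [[i j]|[i j]] /=.
    rewrite ev_mon !evM !evXn ep0 ep1 /D !exprMn.
    have hi : (i <= N)%N by rewrite -ltnS.
    have hj : (j <= N)%N by rewrite -ltnS.
    have -> : ev iota z q0 ^+ N = ev iota z q0 ^+ i * ev iota z q0 ^+ (N - i).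
      by rewrite -exprD subnKC.
    have -> : ev iota z q1 ^+ N = ev iota z q1 ^+ j * ev iota z q1 ^+ (N - j).
      by rewrite -exprD subnKC.
    ring.
  by rewrite evM [ev _ _ Q]hQ mul0r ev0 mulr0.
have PY0 : PY = 0.
  apply: iy; move: evLin; rewrite Lin0 ev0 => /esym/eqP.
  rewrite mulf_eq0 /D expf_eq0 mulf_eq0 (negbTE hq0) (negbTE hq1) andbF orFb.
  by move/eqP.
have wl : forall i j : 'I_N.+1, w 0 (enum_rank (inl (i, j) : U)) = 0.
  move=> i j; rewrite -(@coef_pick _ _ basisY (w 0) (inl (i, j)) (mon i j)).
    by rewrite -/PY PY0 mcoeff0.
  case=> [[i' j']|[i' j']] /=; last by rewrite mcoeff0.
  by rewrite mcoeffX mon_inj.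
pose basisG (u : U) : {mpoly k[2]} := match u with
  | inr (i, j) => 'X_[mon i j] | inl _ => 0 end.
pose GG := \sum_r w 0 r *: basisG (enum_val r).
have LinQ : Lin = Q * GG.
  rewrite /Lin /GG mulr_sumr; apply: eq_bigr => r _.
  case Er: (enum_val r) => [[i j]|[i j]] /=.
    by rewrite -(enum_valK r) Er wl scale0r scaler0 mulr0.
  by rewrite scalerAr.
have GG0 : GG = 0.
  by move: Lin0; rewrite LinQ => /eqP; rewrite mulf_eq0 (negbTE nzQ) => /eqP.
have wr : forall i j : 'I_K.+1, w 0 (enum_rank (inr (i, j) : U)) = 0.
  move=> i j; rewrite -(@coef_pick _ _ basisG (w 0) (inr (i, j)) (mon i j)).
    by rewrite -/GG GG0 mcoeff0.
  case=> [[i' j']|[i' j']] /=; first by rewrite mcoeff0.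
  by rewrite mcoeffX mon_inj.
case/negP: nzw; apply/eqP/rowP => r; rewrite [RHS]mxE -(enum_valK r).
by case: (enum_val r) => [[i j]|[i j]]; [apply: wl | apply: wr].
Qed.

End Key.

Section FieldAlg.
Variables (F : fieldType) (a b c d x0 y0 X1 Y1 t1 t2 t3 t4 : F).
Hypotheses (h2 : 2 != 0 :> F) (ha : a != 0) (hb : b != 0).
Hypotheses (hx : x0 ^+ 2 - a * y0 ^+ 2 = b) (H1 : t1 ^+ 2 - a * t2 ^+ 2 = b).
Hypothesis (H2 : t3 ^+ 2 - a * t4 ^+ 2 = 2 * c * t1 + d).
Hypotheses (hA : 2 * c * x0 + d != 0) (hX1 : X1 ^+ 2 - a * Y1 ^+ 2 = 2 * c * x0 + d).
Hypothesis hq : t2 + y0 != 0.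

Definition AA := 2 * c * x0 + d.
Definition BB := - (4 * a * c * y0).
Definition CC := a * (2 * c * x0 - d).
Definition qq := t2 + y0.
Definition ss := (t1 + x0) / qq.
Definition XX := t3 * ss + a * t4.
Definition YY := t3 + ss * t4.
Definition Z1 := (XX * X1 - a * YY * Y1) / AA.
Definition Z2 := (YY * X1 - XX * Y1) / AA.
Definition SS := ss + BB / (2 * AA).
Definition DD := CC / AA - BB ^+ 2 / (4 * AA ^+ 2).
Definition MM := Z1 + SS.

Lemma F1 : qq * (ss ^+ 2 - a) = 2 * (ss * x0 - a * y0).
Proof.
have ht1 : t1 = ss * qq - x0 by rewrite /ss divfK // addrK.
have e : qq * (qq * (ss ^+ 2 - a) - 2 * (ss * x0 - a * y0)) = 0.
  transitivity ((ss * qq - x0) ^+ 2 - a * (qq - y0) ^+ 2 - (x0 ^+ 2 - a * y0 ^+ 2)).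
    by ring.
  by rewrite -ht1 /qq addrK H1 hx subrr.
by move: e => /eqP; rewrite mulf_eq0 (negbTE hq) orFb subr_eq0 => /eqP.
Qed.

Lemma F2 : ss ^+ 2 - a != 0.
Proof.
apply/negP => /eqP hs.
have e1 : ss * x0 - a * y0 = 0.
  by move: F1 => /esym/eqP; rewrite hs mulr0 mulf_eq0 (negbTE h2) orFb => /eqP.
have : a * b = x0 ^+ 2 * - (ss ^+ 2 - a) + (ss * x0 - a * y0) * (ss * x0 + a * y0).
  by rewrite -hx; ring.
rewrite hs e1 oppr0 mulr0 mul0r addr0 => /eqP; rewrite mulf_eq0 (negbTE ha) (negbTE hb).
done.
Qed.

Lemma T2 : t2 = 2 * (ss * x0 - a * y0) / (ss ^+ 2 - a) - y0.
Proof. by rewrite -F1 mulfK ?F2 // /qq addrK. Qed.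

Lemma T1 : t1 = ss * (2 * (ss * x0 - a * y0) / (ss ^+ 2 - a)) - x0.
Proof. by rewrite -F1 mulfK ?F2 // /ss divfK // addrK. Qed.

Lemma T3 : t3 = (XX * ss - a * YY) / (ss ^+ 2 - a).
Proof.
apply: (canRL (mulfK F2)); rewrite /XX /YY; ring.
Qed.

Lemma T4 : t4 = (YY * ss - XX) / (ss ^+ 2 - a).
Proof.
apply: (canRL (mulfK F2)); rewrite /XX /YY; ring.
Qed.

Lemma F5 : XX ^+ 2 - a * YY ^+ 2 = AA * ss ^+ 2 + BB * ss + CC.
Proof.
have ht1 : t1 = ss * qq - x0 by rewrite /ss divfK // addrK.
transitivity ((t3 ^+ 2 - a * t4 ^+ 2) * (ss ^+ 2 - a)); first by rewrite /XX /YY; ring.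
rewrite H2 ht1.
transitivity (2 * c * ss * (qq * (ss ^+ 2 - a)) - (2 * c * x0 - d) * (ss ^+ 2 - a)).
  by ring.
rewrite F1 /AA /BB /CC; ring.
Qed.

Lemma F6X : XX = Z1 * X1 + a * Z2 * Y1.
Proof.
rewrite /Z1 /Z2 (_ : AA = X1 ^+ 2 - a * Y1 ^+ 2); last by rewrite hX1.
field.
by rewrite hX1.
Qed.

Lemma F6Y : YY = Z1 * Y1 + Z2 * X1.
Proof.
rewrite /Z1 /Z2 (_ : AA = X1 ^+ 2 - a * Y1 ^+ 2); last by rewrite hX1.
field.
by rewrite hX1.
Qed.

Lemma F6 : Z1 ^+ 2 - a * Z2 ^+ 2 = (XX ^+ 2 - a * YY ^+ 2) / AA.
Proof.
rewrite /Z1 /Z2 (_ : AA = X1 ^+ 2 - a * Y1 ^+ 2); last by rewrite hX1.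
field.
by rewrite hX1.
Qed.

Lemma h4 : 4 != 0 :> F.
Proof. by rewrite (_ : 4 = 2 * 2 :> F) ?mulf_neq0 // -natrM. Qed.

Lemma F7 : Z1 ^+ 2 - a * Z2 ^+ 2 = SS ^+ 2 + DD.
Proof. rewrite F6 F5 /SS /DD; field; by rewrite hA h4 h2. Qed.

Lemma F8 : (Z1 - SS) * MM = a * Z2 ^+ 2 + DD.
Proof.
transitivity (Z1 ^+ 2 - a * Z2 ^+ 2 - SS ^+ 2 + a * Z2 ^+ 2); first by rewrite /MM; ring.
rewrite F7; ring.
Qed.

Lemma Gm : MM != 0 ->
  Z1 = (MM + (a * Z2 ^+ 2 + DD) / MM) / 2 /\
  ss = (MM - (a * Z2 ^+ 2 + DD) / MM) / 2 - BB / (2 * AA).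
Proof.
move=> hm; rewrite -F8 mulfK //; split.
  by rewrite /MM; field; rewrite h2.
by rewrite /MM /SS; field; rewrite ?hA ?h2.
Qed.

Lemma G0 : MM = 0 -> a * Z2 ^+ 2 + DD = 0 /\ Z1 = - (ss + BB / (2 * AA)).
Proof.
move=> hm; split; first by rewrite -F8 hm mulr0.
by apply/eqP; rewrite -subr_eq0 opprK -/SS -/MM hm.
Qed.

End FieldAlg.

Lemma hom2 (k : fieldType) n (i : 'I_n) (c : k) : c *: ('X_i * 'X_i) \is 2.-homog.
Proof.
apply: rpredZ; rewrite -mpolyXD dhomogX /= mdegD !mdeg1 //.
Qed.

Lemma nonsq_neq0 (k : fieldType) (a : k) : ~ (exists y : k, y ^+ 2 = a) -> a != 0.
Proof. by move=> h; apply/eqP => ha; apply: h; exists 0; rewrite ha expr0n. Qed.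

Lemma conic_pt (k : fieldType) (a kap : k) :
  C1_field k -> ~ (exists y : k, y ^+ 2 = a) -> kap != 0 ->
  exists x0 y0 : k, x0 ^+ 2 - a * y0 ^+ 2 = kap.
Proof.
move=> hC1 hsq hk.
pose i0 : 'I_3 := inord 0; pose i1 : 'I_3 := inord 1; pose i2 : 'I_3 := inord 2.
pose f : {mpoly k[3]} := 1 *: ('X_i0 * 'X_i0) + (- a) *: ('X_i1 * 'X_i1)
   + (- kap) *: ('X_i2 * 'X_i2).
have hf : f \is 2.-homog by rewrite !rpredD ?hom2.
have [v [[i hi] hv]] := hC1 3%N 2%N f isT isT hf.
move: hv; rewrite /f !mevalD !mevalZ !mevalM !mevalXU mul1r !mulNr.
move=> hv.
have hv' : v i0 ^+ 2 = a * v i1 ^+ 2 + kap * v i2 ^+ 2.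
  by apply/eqP; rewrite -subr_eq0; apply/eqP; rewrite -[RHS]hv; ring.
have hv2 : v i2 != 0.
  apply/negP => /eqP h2; move: hv'; rewrite h2 expr0n mulr0 addr0 => hv'.
  have hv1 : v i1 = 0.
    case: (eqVneq (v i1) 0) => // h1; exfalso; apply: hsq; exists (v i0 / v i1).
    by rewrite expr_div_n hv' mulfK // expf_neq0.
  have hv0 : v i0 = 0.
    by apply/eqP; move: (hv'); rewrite hv1 expr0n mulr0 => /eqP; rewrite expf_eq0.
  move: hi; suff -> : v i = 0 by rewrite eqxx.
  case: i => [[|[|[|i]]] hi3] //.
  - by rewrite -hv0; congr v; apply: val_inj; rewrite /= inordK.
  - by rewrite -hv1; congr v; apply: val_inj; rewrite /= inordK.
  - by rewrite -h2; congr v; apply: val_inj; rewrite /= inordK.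
exists (v i0 / v i2), (v i1 / v i2).
rewrite !expr_div_n hv'; field; exact: hv2.
Qed.

Lemma good_point (k : fieldType) (a b c d : k) :
  C1_field k -> 2 != 0 :> k -> ~ (exists y : k, y ^+ 2 = a) -> b != 0 ->
  (c != 0 \/ d != 0) ->
  exists x0 y0 : k, x0 ^+ 2 - a * y0 ^+ 2 = b /\ 2 * c * x0 + d != 0.
Proof.
move=> hC1 h2 hsq hb hcd.
have ha := nonsq_neq0 hsq.
have [x0 [y0 hxy]] := conic_pt hC1 hsq hb.
case: (eqVneq (2 * c * x0 + d) 0) => hA; last by exists x0, y0.
case: (eqVneq (2 * c * (- x0) + d) 0) => hA'; last first.
  by exists (- x0), y0; rewrite sqrrN.
have hd : d = 0.
  have : 2 * d = 0 by rewrite -[RHS](addr0 0) -{1}hA -{1}hA'; ring.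
  by move/eqP; rewrite mulf_eq0 (negbTE h2) => /eqP.
have hc : c != 0 by case: hcd => // /negP; rewrite hd eqxx.
have hx0 : x0 = 0.
  by move: hA; rewrite hd addr0 => /eqP; rewrite !mulf_eq0 (negbTE h2) (negbTE hc) => /eqP.
have hy0 : y0 != 0.
  by apply/negP => /eqP hy; move: hb; rewrite -hxy hx0 hy expr0n mulr0 subr0 eqxx.
have h1a : 1 - a != 0.
  apply/negP => /eqP e; apply: hsq; exists 1; rewrite expr1n.
  by move: e => /eqP; rewrite subr_eq0 => /eqP.
exists (- (2 * a * y0) / (1 - a)), (- (y0 * (1 + a)) / (1 - a)); split.
  rewrite -hxy hx0; field; exact: h1a.
rewrite hd addr0 !mulf_neq0 ?invr_eq0 // oppr_eq0 !mulf_neq0 //.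
Qed.

Definition pair2 (T : Type) (u v : T) : 'I_2 -> T :=
  fun i => if val i == 0%N then u else v.

Lemma inS_nat (k L : fieldType) (iota : {rmorphism k -> L}) n (z : 'I_n -> L) m :
  inS iota z (m%:R).
Proof. by rewrite -(rmorph_nat iota); apply: inS_C. Qed.

Ltac inS_solve :=
  repeat first [ assumption | apply: inS_C | apply: inS_nat
               | apply: inS_add | apply: inS_mul | apply: inS_opp
               | apply: inS_inv | apply: inS_exp ].

Theorem lemma1p8 (k : fieldType) (L : fieldType) (iota : {rmorphism k -> L})
    (a b c d : k) (t1 t2 t3 t4 : L) :
  infinite_field k -> C1_field k -> (2%:R : k) != 0 ->
  ~ GRing.closed_field_axiom k ->
  ~ (exists y : k, y ^+ 2 = a) -> b != 0 -> (c != 0 \/ d != 0) ->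
  generates iota (fun i : 'I_4 => nth 0 [:: t1; t2; t3; t4] i) -> trdeg_eq iota 2 ->
  t1 ^+ 2 - iota a * t2 ^+ 2 = iota b ->
  t3 ^+ 2 - iota a * t4 ^+ 2 = iota (2%:R * c) * t1 + iota d ->
  k_rational iota.
Proof.
move=> _ hC1 h2 _ hsq hb hcd gt [[y iy] _] H1 H2.
have ha := nonsq_neq0 hsq.
have [x0 [y0 [hxy hA]]] := good_point hC1 h2 hsq hb hcd.
have [X1 [Y1 hX1]] := conic_pt hC1 hsq hA.
have h2' : (2 : L) != 0 by rewrite -(rmorph_nat iota) fmorph_eq0.
have ha' : iota a != 0 by rewrite fmorph_eq0.
have hb' : iota b != 0 by rewrite fmorph_eq0.
have hx' : iota x0 ^+ 2 - iota a * iota y0 ^+ 2 = iota b.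
  by rewrite -hxy; ring.
have H2' : t3 ^+ 2 - iota a * t4 ^+ 2 = 2 * iota c * t1 + iota d.
  by rewrite H2 rmorphM rmorph_nat.
have hA' : 2 * iota c * iota x0 + iota d != 0.
  by rewrite -(rmorph_nat iota 2) -!rmorphM -rmorphD fmorph_eq0.
have hX1' : iota X1 ^+ 2 - iota a * iota Y1 ^+ 2 = 2 * iota c * iota x0 + iota d.
  by rewrite -(rmorph_nat iota 2) -!rmorphM -rmorphD -hX1; ring.
have gen_from : forall z : 'I_2 -> L, inS iota z t1 -> inS iota z t2 ->
    inS iota z t3 -> inS iota z t4 -> generates iota z.
  move=> z i1 i2 i3 i4; apply: (gen_trans gt) => i.
  by case: i => [[|[|[|[|i]]]] hi].
have contra : forall (z : 'I_2 -> L) (P : {mpoly k[2]}) m0,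
    generates iota z -> ev iota z P = 0 -> P@_m0 != 0 -> False.
  move=> z P m0 gz hP; have -> := key iy gz hP; by rewrite mcoeff0 eqxx.
have hq : t2 + iota y0 != 0.
  apply/negP => /eqP hq.
  have et2 : t2 = iota (- y0).
    by rewrite rmorphN; apply/eqP; rewrite -addr_eq0 hq.
  have [e1 ht1] : exists e1, t1 = iota e1.
    have : (t1 - iota x0) * (t1 + iota x0) = 0.
      transitivity (t1 ^+ 2 - iota a * t2 ^+ 2 - (iota x0 ^+ 2 - iota a * iota y0 ^+ 2)
        + iota a * (t2 - iota (- y0)) * (t2 + iota (- y0))).
        by rewrite rmorphN; ring.
      by rewrite H1 hx' -et2 !subrr; ring.
    move/eqP; rewrite mulf_eq0 => /orP [|] /eqP h.
      by exists x0; apply/eqP; rewrite -subr_eq0 h.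
    by exists (- x0); rewrite rmorphN; apply/eqP; rewrite -addr_eq0 h.
  apply: (contra (pair2 t3 t4)
    ('X_[mon 2 0] - a *: 'X_[mon 0 2] - (2%:R * c * e1 + d)%:MP) (mon 2 0)).
  - apply: gen_from.
    + by rewrite ht1; apply: inS_C.
    + by rewrite et2; apply: inS_C.
    + exact: (inS_X iota (pair2 t3 t4) ord0).
    + exact: (inS_X iota (pair2 t3 t4) ord_max).
  - rewrite !evB evZ evC !ev_mon /pair2 /= !expr0 mulr1 mul1r H2 ht1.
    rewrite rmorphD !rmorphM; ring.
  - rewrite !mcoeffB mcoeffZ !mcoeffX mcoeffC !mon_inj /=.
    rewrite (_ : (mon 2 0 == 0%MM) = false) ?mulr0 ?subr0 ?oner_eq0 //.
    by apply/negbTE; apply/eqP => /(congr1 (fun m : 'X_{1..2} => m ord0)); rewrite monE0 mnm0E.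
have eT1 := T1 h2' ha' hb' hx' H1 hq.
have eT2 := T2 h2' ha' hb' hx' H1 hq.
have eT3 := T3 t3 t4 h2' ha' hb' hx' H1 hq.
have eT4 := T4 t3 t4 h2' ha' hb' hx' H1 hq.
have eX := F6X (iota y0) t1 t2 t3 t4 hA' hX1'.
have eY := F6Y (iota y0) t1 t2 t3 t4 hA' hX1'.
have hG := Gm h2' hx' H1 H2' hA' hX1' hq.
have hG0 := G0 h2' hx' H1 H2' hA' hX1' hq.
move: eT1 eT2 eT3 eT4 eX eY hG hG0.
set s := ss _ _ _ _. set XX' := XX _ _ _ _ _ _ _. set YY' := YY _ _ _ _ _ _.
set z1 := Z1 _ _ _ _ _ _ _ _ _ _ _. set z2 := Z2 _ _ _ _ _ _ _ _ _ _ _.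
set m := MM _ _ _ _ _ _ _ _ _ _ _.
move=> eT1 eT2 eT3 eT4 eX eY hG hG0.
have tmem : forall z : 'I_2 -> L, inS iota z s -> inS iota z z1 -> inS iota z z2 ->
    generates iota z.
  move=> z hs hz1 hz2.
  have hX : inS iota z XX' by rewrite eX; inS_solve.
  have hY : inS iota z YY' by rewrite eY; inS_solve.
  apply: gen_from.
  - by rewrite eT1; inS_solve.
  - by rewrite eT2; inS_solve.
  - by rewrite eT3; inS_solve.
  - by rewrite eT4; inS_solve.
case: (eqVneq m 0) => hm; last first.
  have [ez1 es] := hG hm.
  pose z := pair2 m z2.
  have hzm : inS iota z m by exact: (inS_X iota z ord0).
  have hz2 : inS iota z z2 by exact: (inS_X iota z ord_max).
  have gz : generates iota z.
    apply: tmem => //; [rewrite es | rewrite ez1]; inS_solve.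
  by exists 2%N, z; split => //; apply: key iy gz.
exfalso.
have [hrel ez1] := hG0 hm.
pose z := pair2 s z2.
have hzs : inS iota z s by exact: (inS_X iota z ord0).
have hz2 : inS iota z z2 by exact: (inS_X iota z ord_max).
have gz : generates iota z by apply: tmem => //; rewrite ez1; inS_solve.
pose dk := a * (2%:R * c * x0 - d) / (2%:R * c * x0 + d)
  - (- (4%:R * a * c * y0)) ^+ 2 / (4%:R * (2%:R * c * x0 + d) ^+ 2).
apply: (contra z (a *: 'X_[mon 0 2] + dk%:MP) (mon 0 2) gz).
  rewrite evD evZ evC ev_mon /z /pair2 /= expr0 mul1r -[RHS]hrel.
  congr (_ + _); rewrite /dk /DD /CC /BB /AA.
  rewrite !(rmorphB, rmorphD, rmorphM, rmorphN, fmorphV, rmorphXn, rmorph_nat) ?rmorph1.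
  ring.
rewrite mcoeffD mcoeffZ mcoeffX mcoeffC eqxx mulr1.
rewrite (_ : (mon 0 2 == 0%MM) = false) ?mulr0 ?addr0 //.
by apply/negbTE; apply/eqP => /(congr1 (fun m : 'X_{1..2} => m ord_max)); rewrite monE1 mnm0E.
Qed.
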